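(* Let $m\ge1$ be an integer, $r=2m+1$, $\varepsilon>0$ real, $p$ a positive integer, and $\mathcal C_0^r,\dots,\mathcal C_{r-1}^r>0$. Let $f_j=f(x_j)$ be values of a function on a uniform grid $x_j=x_0+j\Delta x$, fix an index $i$, and let $\hat f_{i+1/2}=\sum_{k=0}^{r-1}\omega_k\,g(f_{i+k-r+1},\dots,f_{i+k})$ be the WENO reconstruction defined in the context. Then $$\hat f_{i+1/2}=\frac{\mathbf p_1(\mathbf f)}{\mathbf p_2(\mathbf f)},\qquad \mathbf f=(f_{i-r+1},\dots,f_{i+r-1}),$$ where $\mathbf p_1,\mathbf p_2$ are multivariate polynomials in $\mathbf f$ of degree at most $2pr-1$ and $2p(r-1)$ respectively, with $\mathbf p_2(\mathbf f)>0$ for all real $\mathbf f$.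
   Context: For $k=0,\dots,r-1$, the candidate stencil $S^k$ consists of the grid points $x_{i+k-r+1},\dots,x_{i+k}$; $\mathbf p_k$ is the polynomial of degree at most $r-1$ interpolating $f$ there. The linear map $g$ is $g(f_{i+k-r+1},\dots,f_{i+k})=\sum_{l=0}^{r-1}c^r_{k,l}f_{i+k-r+1+l}=\mathbf p_k(x_{i+1/2})$, with constants $c^r_{k,l}$ depending only on $r,k,l$, where $x_{i\pm1/2}=x_i\pm\Delta x/2$. The smoothness indicator is $\mathbf{IS}_k=\sum_{l=1}^{r-1}(\Delta x)^{2l-1}\int_{x_{i-1/2}}^{x_{i+1/2}}\big(\mathbf p_k^{(l)}(x)\big)^2dx$, and the WENO weights are $\omega_k=\alpha_k/(\alpha_0+\dots+\alpha_{r-1})$, $\alpha_k=\mathcal C_k^r/(\varepsilon+\mathbf{IS}_k)^p$. *)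

(* Defs.v *)
From HB Require Import structures.
From mathcomp Require Import all_boot all_order all_algebra.
From mathcomp Require Export mpoly.
Unset Printing Implicit Defensive.
Import Order.TTheory GRing.Theory Num.Theory.
Local Open Scope ring_scope.

Section WENO.
Variable R : rcfType.

Definition grid (x0 dx : R) (j : int) : R := x0 + j%:~R * dx.

Definition lagrange (n : nat) (xs ys : 'I_n -> R) : {poly R} :=
  \sum_(l < n) ys l *:
     \prod_(j < n | j != l) (('X - (xs j)%:P) * ((xs l - xs j)^-1)%:P).

Arguments lagrange {n} xs ys.

Definition poly_prim (q : {poly R}) : {poly R} :=
  \poly_(j < (size q).+1) (if j is j'.+1 then q`_j' / j%:R else 0).
Definition poly_integral (q : {poly R}) (a b : R) : R :=
  (poly_prim q).[b] - (poly_prim q).[a].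

Definition weno_r (m : nat) : nat := (2 * m + 1)%N.

Definition weno_pk (m : nat) (x0 dx : R) (i : int) (f : R -> R)
    (k : 'I_(weno_r m)) : {poly R} :=
  lagrange
    (fun l : 'I_(weno_r m) =>
       grid x0 dx (i + (Posz k) - (Posz (weno_r m)) + 1 + (Posz l)))
    (fun l : 'I_(weno_r m) =>
       f (grid x0 dx (i + (Posz k) - (Posz (weno_r m)) + 1 + (Posz l)))).

Definition x_iph (x0 dx : R) (i : int) : R := grid x0 dx i + dx / 2%:R.
Definition x_imh (x0 dx : R) (i : int) : R := grid x0 dx i - dx / 2%:R.

Definition weno_g (m : nat) (x0 dx : R) (i : int) (f : R -> R) (k : 'I_(weno_r m)) : R := (weno_pk m x0 dx i f k).[x_iph x0 dx i].

Definition weno_IS (m : nat) (x0 dx : R) (i : int) (f : R -> R) (k : 'I_(weno_r m)) : R :=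
  \sum_(1 <= l < weno_r m)
     dx ^+ (2 * l - 1) *
     poly_integral (((weno_pk m x0 dx i f k)^`(l)) ^+ 2)
                   (x_imh x0 dx i) (x_iph x0 dx i).

Definition weno_alpha m (eps : R) (p : nat) (C : 'I_(weno_r m) -> R)
    (x0 dx : R) (i : int) (f : R -> R) (k : 'I_(weno_r m)) : R :=
  C k / (eps + weno_IS m x0 dx i f k) ^+ p.

Definition weno_omega (m : nat) (eps : R) (p : nat) (C : 'I_(weno_r m) -> R)
    (x0 dx : R) (i : int) (f : R -> R) (k : 'I_(weno_r m)) : R :=
  weno_alpha m eps p C x0 dx i f k /
  \sum_(j < weno_r m) weno_alpha m eps p C x0 dx i f j.

Definition weno_fhat (m : nat) (eps : R) (p : nat) (C : 'I_(weno_r m) -> R)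
    (x0 dx : R) (i : int) (f : R -> R) : R :=
  \sum_(k < weno_r m) weno_omega m eps p C x0 dx i f k * weno_g m x0 dx i f k.

Definition weno_fvec (m : nat) (x0 dx : R) (i : int) (f : R -> R) : 'I_(2 * weno_r m - 1) -> R :=
  fun j => f (grid x0 dx (i - (Posz (weno_r m)) + 1 + (Posz j))).

End WENO.

Arguments grid {R}.
Arguments poly_prim {R}.
Arguments poly_integral {R}.
Arguments x_iph {R}.
Arguments x_imh {R}.
Arguments weno_pk {R}.
Arguments weno_g {R}.
Arguments weno_IS {R}.
Arguments weno_alpha {R}.
Arguments weno_omega {R}.
Arguments weno_fhat {R}.
Arguments weno_fvec {R}.

(* Main.v *)
Require Import Defs.
From HB Require Import structures.
From mathcomp Require Import all_boot all_order all_algebra.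
From mathcomp Require Import mpoly.
From mathcomp Require Import polyrcf.
From mathcomp Require Import ring lra zify.
Import Order.TTheory GRing.Theory Num.Theory.
Local Open Scope ring_scope.

Section Aux.
Variable R : rcfType.

Lemma prim_coef (q : {poly R}) j :
  (poly_prim q)`_j = if j is j'.+1 then q`_j' / j%:R else 0.
Proof.
rewrite coef_poly; case: ltnP => // h; case: j h => // j h.
by rewrite nth_default ?mul0r // -ltnS.
Qed.

Lemma prim_deriv (q : {poly R}) : (poly_prim q)^`() = q.
Proof.
apply/polyP => j; rewrite coef_deriv prim_coef -[X in X = _]mulr_natr divfK //.
by rewrite pnatr_eq0.
Qed.

Lemma prim_lin (a : R) (q1 q2 : {poly R}) :
  poly_prim (a *: q1 + q2) = a *: poly_prim q1 + poly_prim q2.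
Proof.
apply/polyP => j; rewrite coefD coefZ !prim_coef.
by case: j => [|j]; rewrite ?mulr0 ?addr0 // coefD coefZ mulrDl mulrA.
Qed.

Lemma prim0 : poly_prim (0 : {poly R}) = 0.
Proof. by apply/polyP => j; rewrite prim_coef coef0; case: j => // j; rewrite coef0 mul0r. Qed.

Lemma pint_lin (a : R) (q1 q2 : {poly R}) x y :
  poly_integral (a *: q1 + q2) x y = a * poly_integral q1 x y + poly_integral q2 x y.
Proof. rewrite /poly_integral prim_lin !hornerD !hornerZ; ring. Qed.

Lemma pint0 x y : poly_integral (0 : {poly R}) x y = 0.
Proof. by rewrite /poly_integral prim0 !horner0 subrr. Qed.

Lemma pintZ (a : R) (q : {poly R}) x y : poly_integral (a *: q) x y = a * poly_integral q x y.
Proof. by have := pint_lin a q 0 x y; rewrite !addr0 pint0 addr0. Qed.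

Lemma pintD (q1 q2 : {poly R}) x y : poly_integral (q1 + q2) x y = poly_integral q1 x y + poly_integral q2 x y.
Proof. by have := pint_lin 1 q1 q2 x y; rewrite !scale1r mul1r. Qed.

Lemma pint_sum (I : Type) (s : seq I) (P : pred I) (F : I -> {poly R}) x y :
  poly_integral (\sum_(k <- s | P k) F k) x y = \sum_(k <- s | P k) poly_integral (F k) x y.
Proof.
apply: (big_morph (fun q => poly_integral q x y)) => [q1 q2|]; first exact: pintD.
exact: pint0.
Qed.

Lemma pint_sq_ge0 (q : {poly R}) x y : x <= y -> 0 <= poly_integral (q ^+ 2) x y.
Proof.
move=> xy; rewrite /poly_integral subr_ge0.
apply: (@ler_hornerW _ x y) => //.
- by move=> z _; rewrite prim_deriv horner_exp sqr_ge0.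
- by rewrite in_itv /= lexx xy.
- by rewrite in_itv /= lexx xy.
Qed.

Lemma msizeM' n (p q : {mpoly R[n]}) : (msize (p * q) <= (msize p + msize q).-1)%N.
Proof.
have [->|p0] := eqVneq p 0; first by rewrite mul0r msize0.
have [->|q0] := eqVneq q 0; first by rewrite mulr0 msize0.
by rewrite msizeM.
Qed.

Lemma msize_sum_le n (I : Type) (s : seq I) (P : pred I) (F : I -> {mpoly R[n]}) d :
  (forall k, P k -> msize (F k) <= d)%N -> (msize (\sum_(k <- s | P k) F k) <= d)%N.
Proof.
move=> h; apply: (big_ind (fun p => msize p <= d)%N) => //; first by rewrite msize0.
move=> x y hx hy; apply: (leq_trans (msizeD_le _ _)); by rewrite geq_max hx hy.
Qed.

Lemma msize_prod_le n (I : Type) (s : seq I) (P : pred I) (F : I -> {mpoly R[n]}) d :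
  (forall k, P k -> msize (F k) <= d.+1)%N ->
  (msize (\prod_(k <- s | P k) F k) <= (d * count P s).+1)%N.
Proof.
move=> h; elim: s => [|x s IH]; first by rewrite big_nil msize1 muln0.
rewrite big_cons [count _ _]/=; case: ifP => Px; last by rewrite add0n.
apply: (leq_trans (msizeM' _ _ _)); have := h x Px; move: IH.
rewrite add1n mulnS; lia.
Qed.

Lemma msize_exp_le n (p : {mpoly R[n]}) d e :
  (msize p <= d.+1)%N -> (msize (p ^+ e) <= (d * e).+1)%N.
Proof.
move=> h; elim: e => [|e IH]; first by rewrite expr0 msize1 muln0.
rewrite exprS; apply: (leq_trans (msizeM' _ _ _)); move: IH h; rewrite mulnS; lia.
Qed.

Lemma msizeXU n (j : 'I_n) : msize ('X_j : {mpoly R[n]}) = 2%N.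
Proof. by rewrite msizeX mdeg1. Qed.


Lemma cnt r (k : 'I_r) : count (fun j => j != k) (index_enum 'I_r) = (r - 1)%N.
Proof.
rewrite -sum1_count sum1dep_card.
have := cardC1 k. rewrite card_ord subn1 => <-.
by apply: eq_card => j; rewrite !inE.
Qed.

End Aux.

Section Main.
Variables (R : rcfType) (m : nat) (x0 dx : R) (i : int).
Local Notation r := (weno_r m).
Local Notation n := (2 * weno_r m - 1)%N.

Lemma idx_lt (k l : 'I_r) : (k + l < n)%N.
Proof. have := ltn_ord k; have := ltn_ord l; rewrite /weno_r; lia. Qed.

Definition idx k l : 'I_n := Ordinal (idx_lt k l).
Definition node (k l : 'I_r) : R := grid x0 dx (i + Posz k - Posz r + 1 + Posz l).
Definition Lk (k l : 'I_r) : {poly R} :=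
  \prod_(j < r | j != l) (('X - (node k j)%:P) * ((node k l - node k j)^-1)%:P).
Definition Pk (a : 'I_n -> R) k := \sum_(l < r) a (idx k l) *: Lk k l.

Lemma pk_eq f k : weno_pk m x0 dx i f k = Pk (weno_fvec m x0 dx i f) k.
Proof.
rewrite /weno_pk /lagrange /Pk; apply: eq_bigr => l _; congr (_ *: _).
rewrite /weno_fvec /node; congr f; congr grid; rewrite /= PoszD; ring.
Qed.

Definition xm := x_imh x0 dx i.
Definition xp := x_iph x0 dx i.

Definition IS' (a : 'I_n -> R) k := \sum_(1 <= l < r)
  dx ^+ (2 * l - 1) * poly_integral ((Pk a k)^`(l) ^+ 2) xm xp.

Lemma IS_eq f k : weno_IS m x0 dx i f k = IS' (weno_fvec m x0 dx i f) k.
Proof. by rewrite /weno_IS /IS'; apply: eq_bigr => l _; rewrite pk_eq. Qed.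

Lemma IS'_ge0 a k : 0 < dx -> 0 <= IS' a k.
Proof.
move=> dx0; apply: sumr_ge0 => l _; apply: mulr_ge0; first by rewrite exprn_ge0 // ltW.
apply: pint_sq_ge0; rewrite /xm /xp /x_imh /x_iph.
have : 0 <= dx / 2%:R by rewrite divr_ge0 // ltW.
lra.
Qed.

Definition W k (l : nat) l1 l2 :=
  dx ^+ (2 * l - 1) * poly_integral ((Lk k l1)^`(l) * (Lk k l2)^`(l)) xm xp.

Definition Q k : {mpoly R[n]} := \sum_(1 <= l < r) \sum_(l1 < r) \sum_(l2 < r)
   W k l l1 l2 *: ('X_(idx k l1) * 'X_(idx k l2)).

Lemma Q_eval a k : (Q k).@[a] = IS' a k.
Proof.
rewrite /Q /IS' raddf_sum; apply: eq_bigr => l _.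
rewrite /Pk linear_sum expr2 mulr_suml pint_sum mulr_sumr raddf_sum; apply: eq_bigr => l1 _.
rewrite mulr_sumr pint_sum mulr_sumr raddf_sum; apply: eq_bigr => l2 _.
rewrite !linearZ /= -scalerAl -scalerAr scalerA pintZ mevalZ mevalM !mevalXU /W; ring.
Qed.

Lemma Q_size k : (msize (Q k) <= 3)%N.
Proof.
apply: msize_sum_le => l _; apply: msize_sum_le => l1 _; apply: msize_sum_le => l2 _.
apply: (leq_trans (msizeZ_le _ _)); apply: (leq_trans (msizeM' _ _ _ _)).
by rewrite !msizeXU.
Qed.

Definition G k : {mpoly R[n]} := \sum_(l < r) (Lk k l).[xp] *: 'X_(idx k l).

Lemma G_eval f k : (G k).@[weno_fvec m x0 dx i f] = weno_g m x0 dx i f k.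
Proof.
rewrite /weno_g pk_eq /G /Pk raddf_sum horner_sum; apply: eq_bigr => l _.
by rewrite /= mevalZ mevalXU hornerZ mulrC.
Qed.

Lemma G_size k : (msize (G k) <= 2)%N.
Proof.
apply: msize_sum_le => l _; apply: (leq_trans (msizeZ_le _ _)).
by rewrite msizeXU.
Qed.

End Main.

Lemma alg (R : rcfType) r (p : nat) (C g D : 'I_r -> R) :
  (forall k, 0 < C k) -> (forall k, 0 < D k) -> (0 < r)%N ->
  \sum_(k < r) (C k / D k ^+ p / \sum_(j < r) (C j / D j ^+ p)) * g k =
  (\sum_(k < r) C k * (g k * \prod_(j < r | j != k) D j ^+ p)) /
  (\sum_(k < r) C k * \prod_(j < r | j != k) D j ^+ p).
Proof.
move=> C0 D0 r0.
have Pp k : 0 < \prod_(j < r | j != k) D j ^+ p.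
  by apply: prodr_gt0 => j _; apply: exprn_gt0.
have Tp : 0 < \prod_(j < r) D j ^+ p by apply: prodr_gt0 => j _; apply: exprn_gt0.
have Denp : 0 < \sum_(k < r) C k * \prod_(j < r | j != k) D j ^+ p.
  rewrite (bigD1 (Ordinal r0)) //=; apply: ltr_pwDl; first by apply: mulr_gt0.
  by apply: sumr_ge0 => k _; apply: mulr_ge0; apply: ltW.
have eq1 k : C k / D k ^+ p = C k * \prod_(j < r | j != k) D j ^+ p / \prod_(j < r) D j ^+ p.
  rewrite [\prod_(j < r) _](bigD1 k) //=; have := Pp k; have := exprn_gt0 p (D0 k).
  move=> h1 h2; field; by rewrite ?gt_eqF // ?mulf_neq0 // ?gt_eqF.
rewrite (eq_bigr _ (fun k _ => eq1 k)) -mulr_suml [RHS]mulr_suml.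
apply: eq_bigr => k _; rewrite eq1.
move: Tp Denp; set T := \prod_(j < r) _; set Den := \sum_(k < r) _ => Tp Denp.
field; by rewrite ?gt_eqF // ?mulf_neq0 // ?gt_eqF.
Qed.

Theorem corollary5 (R : rcfType) (m : nat) (eps : R) (p : nat)
    (C : 'I_(weno_r m) -> R) (x0 dx : R) (i : int) :
  (1 <= m)%N -> 0 < eps -> (0 < p)%N -> (forall k, 0 < C k) -> 0 < dx ->
  exists P1 P2 : {mpoly R[2 * weno_r m - 1]},
    [/\ (msize P1 <= 2 * p * weno_r m)%N,
        (msize P2 <= (2 * p * (weno_r m - 1)).+1)%N,
        (forall v : 'I_(2 * weno_r m - 1) -> R, 0 < P2.@[v]) &
        (forall f : R -> R,
           weno_fhat m eps p C x0 dx i f =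
           P1.@[weno_fvec m x0 dx i f] / P2.@[weno_fvec m x0 dx i f])].
Proof.
move=> m1 eps0 p0 C0 dx0.
have r0 : (0 < weno_r m)%N by rewrite /weno_r addn1.
pose Dn j : {mpoly R[2 * weno_r m - 1]} := eps%:MP + Q R m x0 dx i j.
have Dsize j : (msize (Dn j) <= 3)%N.
  apply: (leq_trans (msizeD_le _ _)); rewrite geq_max Q_size andbT msizeC.
  by case: (_ != 0).
have Psize k : (msize (\prod_(j < weno_r m | j != k) Dn j ^+ p) <= (2 * p * (weno_r m - 1)).+1)%N.
  rewrite -(cnt _ k); apply: msize_prod_le => j _; exact: msize_exp_le.
exists (\sum_(k < weno_r m) C k *: (G R m x0 dx i k * \prod_(j < weno_r m | j != k) Dn j ^+ p)).
exists (\sum_(k < weno_r m) C k *: \prod_(j < weno_r m | j != k) Dn j ^+ p).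
have evP (a : 'I_(2 * weno_r m - 1) -> R) k :
    (\prod_(j < weno_r m | j != k) Dn j ^+ p).@[a] =
    \prod_(j < weno_r m | j != k) (eps + IS' R m x0 dx i a j) ^+ p.
  rewrite rmorph_prod; apply: eq_bigr => j _.
  by rewrite rmorphXn /= mevalD mevalC Q_eval.
have ev2 a : (\sum_(k < weno_r m) C k *: \prod_(j < weno_r m | j != k) Dn j ^+ p).@[a] =
    \sum_(k < weno_r m) C k * \prod_(j < weno_r m | j != k) (eps + IS' R m x0 dx i a j) ^+ p.
  by rewrite raddf_sum; apply: eq_bigr => k _; rewrite /= mevalZ evP.
have ev1 a : (\sum_(k < weno_r m) C k *: (G R m x0 dx i k * \prod_(j < weno_r m | j != k) Dn j ^+ p)).@[a] =
    \sum_(k < weno_r m) C k * ((G R m x0 dx i k).@[a] *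
       \prod_(j < weno_r m | j != k) (eps + IS' R m x0 dx i a j) ^+ p).
  by rewrite raddf_sum; apply: eq_bigr => k _; rewrite /= mevalZ mevalM evP.
split.
- apply: msize_sum_le => k _; apply: (leq_trans (msizeZ_le _ _)).
  apply: (leq_trans (msizeM' _ _ _ _)); have := G_size R m x0 dx i k; have := Psize k.
  rewrite /weno_r; nia.
- apply: msize_sum_le => k _; apply: (leq_trans (msizeZ_le _ _)); exact: Psize.
- move=> v; rewrite ev2.
  rewrite (bigD1 (Ordinal r0)) //=; apply: ltr_pwDl.
    apply: mulr_gt0 => //; apply: prodr_gt0 => j _; apply: exprn_gt0.
    by apply: ltr_wpDr => //; apply: IS'_ge0.
  apply: sumr_ge0 => k _; apply: mulr_ge0; first exact: ltW.
  apply: prodr_ge0 => j _; apply: exprn_ge0; apply: addr_ge0; first exact: ltW.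
  exact: IS'_ge0.
- move=> f; rewrite ev1 ev2.
  have Dp j : 0 < eps + weno_IS m x0 dx i f j.
    by rewrite IS_eq; apply: ltr_wpDr => //; apply: IS'_ge0.
  rewrite /weno_fhat /weno_omega /weno_alpha.
  rewrite (alg _ _ _ C (weno_g m x0 dx i f) _ C0 Dp r0).
  congr (_ / _); apply: eq_bigr => k _.
    rewrite G_eval; congr (_ * (_ * _)); apply: eq_bigr => j _; by rewrite IS_eq.
  congr (_ * _); apply: eq_bigr => j _; by rewrite IS_eq.
Qed.
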